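(* Let $\Delta\ge 3$ be an integer and let $G\in\mathcal{G}_\Delta$. Let $c_1,\dots,c_\Delta$ be real numbers with $0<c_\Delta\le \frac{2}{2\Delta+1}$ and $c_i=\min\left\{\frac{1-c_{i+1}}{i},\frac{2}{2i+1}\right\}$ for $1\le i\le \Delta-1$. Then $$\alpha(G)\ge \sum_{i=1}^{\Delta} c_i|V_i(G)|.$$
   Context: All graphs are simple, finite and undirected. For an integer $\Delta\ge 3$, $\mathcal{G}_\Delta$ denotes the set of connected graphs $G\neq K_{\Delta+1}$ with maximum degree $\Delta$. For a graph $G$ and $i\ge 1$, $V_i(G)$ is the set of vertices of $G$ of degree $i$. $\alpha(G)$ is the independence number of $G$ (maximum size of a set of pairwise non-adjacent vertices). *)

(* Defs.v *)
From mathcomp Require Import all_boot all_order all_algebra.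
Set Implicit Arguments. Unset Strict Implicit. Unset Printing Implicit Defensive.
Import Order.TTheory GRing.Theory Num.Theory.

Definition simple_graph (T : finType) (e : rel T) : Prop :=
  symmetric e /\ irreflexive e.

Definition deg (T : finType) (e : rel T) (v : T) : nat := #|[set u | e v u]|.

Definition Vdeg (T : finType) (e : rel T) (i : nat) : {set T} :=
  [set v | deg e v == i].

Definition connected_graph (T : finType) (e : rel T) : Prop :=
  forall x y : T, connect e x y.

Definition max_degree_eq (T : finType) (e : rel T) (D : nat) : Prop :=
  (forall v, deg e v <= D) /\ (exists v, deg e v = D).

Definition is_complete (T : finType) (e : rel T) (n : nat) : Prop :=
  #|T| = n /\ (forall x y : T, x != y -> e x y).

Definition independent (T : finType) (e : rel T) (S : {set T}) : bool :=
  [forall x in S, forall y in S, ~~ e x y].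

Definition alpha (T : finType) (e : rel T) : nat :=
  \max_(S : {set T} | independent e S) #|S|.

(* Main.v *)
Require Import Defs.
From mathcomp Require Import all_boot all_order all_algebra.
From mathcomp Require Import zify ring lra.
Import Order.TTheory GRing.Theory Num.Theory.
Set Implicit Arguments. Unset Strict Implicit. Unset Printing Implicit Defensive.

Section Graph.
Variables (T : finType) (e : rel T).
Hypothesis esym : symmetric e.
Hypothesis eirr : irreflexive e.
Implicit Types (S A B I F : {set T}) (x y u v : T).

Definition Nb (S : {set T}) x := [set y in S | e x y].
Definition dg S x := #|Nb S x|.
Definition NN S x := x |: Nb S x.
Definition clv S x := [forall u in Nb S x, NN S u == NN S x].
Definition al (S : {set T}) :=
  \max_(I : {set T} | independent e I && (I \subset S)) #|I|.

Lemma indepP (I : {set T}) :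
  reflect (forall x y, x \in I -> y \in I -> ~~ e x y) (independent e I).
Proof.
apply: (iffP forall_inP) => [H x y xI yI|H x xI].
  by have /forall_inP := H x xI; apply.
by apply/forall_inP => y yI; apply: H.
Qed.

Lemma al_ge (I S : {set T}) : independent e I -> I \subset S -> #|I| <= al S.
Proof. by move=> HI HS; apply: (@leq_bigmax_cond _ (fun I => independent e I && (I \subset S)) (fun I => #|I|) I); rewrite HI HS. Qed.

Lemma al_wit (S : {set T}) :
  exists I, [/\ independent e I, I \subset S & #|I| = al S].
Proof.
have P0 : independent e set0 && (set0 \subset S).
  by rewrite sub0set andbT; apply/indepP => x y; rewrite inE.
case: (@arg_maxnP _ set0 (fun I => independent e I && (I \subset S)) (fun I : {set T} => #|I|) P0) => I /andP[HI HS] Hmax.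
exists I; split => //; apply/eqP; rewrite eqn_leq al_ge //.
by apply/bigmax_leqP => J /andP[HJ HJS]; apply: Hmax; rewrite HJ HJS.
Qed.

Lemma NbE S x y : (y \in Nb S x) = (y \in S) && e x y.
Proof. by rewrite inE. Qed.

Lemma notin_Nb S x : x \notin Nb S x.
Proof. by rewrite NbE eirr andbF. Qed.

Lemma card_NN S x : #|NN S x| = (dg S x).+1.
Proof. by rewrite cardsU1 notin_Nb. Qed.

Lemma NN_sub S x : x \in S -> NN S x \subset S.
Proof.
move=> xS; apply/subsetP => y; rewrite !inE => /orP[/eqP->//|/andP[]//].
Qed.

Lemma Nb_sub A S x : A \subset S -> Nb A x \subset Nb S x.
Proof.
move=> /subsetP AS; apply/subsetP => y; rewrite !NbE => /andP[/AS -> ->] //.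
Qed.

Lemma dg_sub A S x : A \subset S -> dg A x <= dg S x.
Proof. by move=> AS; apply/subset_leq_card/Nb_sub. Qed.

Lemma al_add1 S v : v \in S -> (al (S :\: NN S v)).+1 <= al S.
Proof.
move=> vS; case: (al_wit (S :\: NN S v)) => I [HI HIS <-].
have vI : v \notin I.
  by apply/negP => /(subsetP HIS); rewrite !inE eqxx.
have <- : #|v |: I| = (#|I|).+1 by rewrite cardsU1 vI.
apply: al_ge.
  apply/indepP => x y; rewrite !inE => /orP[/eqP->|xI] /orP[/eqP->|yI].
  - by rewrite eirr.
  - have := subsetP HIS y yI; rewrite !inE negb_or => /andP[/andP[_ H] yS].
    by move: H; rewrite yS.
  - have := subsetP HIS x xI; rewrite !inE negb_or => /andP[/andP[_ H] xS].
    by rewrite esym; move: H; rewrite xS.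
  - by move/indepP: HI; apply.
apply/subsetP => x; rewrite !inE => /orP[/eqP->//|/(subsetP HIS)].
by rewrite inE => /andP[].
Qed.

Lemma al_split A B : (forall a b, a \in A -> b \in B -> ~~ e a b) ->
  [disjoint A & B] -> al A + al B <= al (A :|: B).
Proof.
move=> Hab dAB.
case: (al_wit A) => IA [HA HAS <-]; case: (al_wit B) => IB [HB HBS <-].
have -> : #|IA| + #|IB| = #|IA :|: IB|.
  rewrite cardsU; suff -> : IA :&: IB = set0 by rewrite cards0 subn0.
  apply/setP => x; rewrite !inE; apply/negP => /andP[/(subsetP HAS) xA /(subsetP HBS) xB].
  by move: dAB; rewrite disjoint_subset => /subsetP /(_ x xA); rewrite inE xB.
apply: al_ge; last by apply: setUSS.
apply/indepP => x y; rewrite !inE => /orP[xI|xI] /orP[yI|yI].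
- by move/indepP: HA; apply.
- by apply: Hab; [apply: (subsetP HAS)|apply: (subsetP HBS)].
- by rewrite esym; apply: Hab; [apply: (subsetP HAS)|apply: (subsetP HBS)].
- by move/indepP: HB; apply.
Qed.

Definition adjclosed (A S : {set T}) :=
  forall x y, x \in A -> y \in S -> e x y -> y \in A.

Lemma Nb_restr A S x : A \subset S -> adjclosed A S -> x \in A -> Nb A x = Nb S x.
Proof.
move=> /subsetP AS HA xA; apply/setP => y; rewrite !NbE.
case yS: (y \in S); case exy: (e x y); rewrite ?andbF ?andbT //=.
  by rewrite (HA x y).
by apply/negP => /AS; rewrite yS.
Qed.

Lemma NN_restr A S x : A \subset S -> adjclosed A S -> x \in A -> NN A x = NN S x.
Proof. by move=> AS HA xA; rewrite /NN (Nb_restr AS HA xA). Qed.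

Lemma dg_restr A S x : A \subset S -> adjclosed A S -> x \in A -> dg A x = dg S x.
Proof. by move=> AS HA xA; rewrite /dg (Nb_restr AS HA xA). Qed.

Lemma clv_restr A S x : A \subset S -> adjclosed A S -> x \in A -> clv A x = clv S x.
Proof.
move=> AS HA xA; rewrite /clv (Nb_restr AS HA xA).
apply: eq_forallb_in => u; rewrite NbE => /andP[uS exu].
have uA : u \in A by apply: (HA x u).
by rewrite (NN_restr AS HA uA) (NN_restr AS HA xA).
Qed.


Lemma in_NN S x : x \in NN S x.
Proof. by rewrite !inE eqxx. Qed.

Lemma NN_clv S x u : clv S x -> u \in NN S x -> NN S u = NN S x.
Proof.
move=> /forall_inP H; rewrite in_setU1 => /orP[/eqP->//|uN].
by apply/eqP; apply: H.
Qed.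

Lemma clv_sub A F x k : A \subset F -> x \in A -> clv A x -> dg A x = k ->
  (forall y, y \in F -> dg F y <= k) -> clv F x /\ dg F x = k.
Proof.
move=> AF xA cx dx HF.
have Heq : forall u, u \in NN A x -> Nb A u = Nb F u.
  move=> u uN; have uA : u \in A by apply: (subsetP (NN_sub xA)).
  have duk : dg A u = k.
    by apply/eqP; rewrite -eqSS -card_NN (NN_clv cx uN) card_NN dx.
  apply/eqP; rewrite eqEcard Nb_sub //=.
  by have := HF u (subsetP AF u uA); rewrite -/(dg F u) -/(dg A u) duk.
have NbFx := Heq x (in_NN A x).
split; last by rewrite /dg -NbFx.
apply/forall_inP => u; rewrite -NbFx => uN.
have uNN : u \in NN A x by rewrite in_setU1 uN orbT.
by rewrite /NN -(Heq u uNN) -NbFx -/(NN A u) -/(NN A x) (NN_clv cx uNN).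
Qed.

Lemma card_split S v : v \in S -> #|S| = #|S :\: NN S v| + (dg S v).+1.
Proof.
move=> vS; rewrite -(cardsID (NN S v) S) addnC -card_NN.
by rewrite (setIidPr (NN_sub vS)).
Qed.

Lemma lemB k n : forall F, #|F| < n -> (forall x, x \in F -> dg F x <= k) ->
  (forall x, x \in F -> clv F x -> dg F x != k) ->
  2 * #|F| + [exists x in F, dg F x < k] <= (2*k+1) * al F.
Proof.
elim: n => [//|n IH] F Fn Hdeg Hcl.
have IH' : forall v, v \in F ->
   2 * #|F :\: NN F v| + [exists x in F :\: NN F v, dg (F :\: NN F v) x < k]
     <= (2*k+1) * al (F :\: NN F v).
  move=> v vF; apply: IH.
  - by move: Fn; rewrite (card_split vF); lia.
  - move=> x; rewrite inE => /andP[_ xF].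
    by apply: leq_trans (Hdeg x xF); apply: dg_sub; apply: subsetDl.
  - move=> x xF' cx; apply/negP => /eqP dx.
    have xF : x \in F by move: xF'; rewrite inE => /andP[].
    have [cF dF] := clv_sub (subsetDl F (NN F v)) xF' cx dx Hdeg.
    by move: (Hcl x xF cF); rewrite dF eqxx.
case: (boolP [exists x in F, dg F x < k]) => [/exists_inP[v vF dv]|nolow].
  have := IH' v vF; have := al_add1 vF; have := card_split vF.
  move: dv; nia.
case: (set_0Vmem F) => [->|[v vF]]; first by rewrite cards0.
have dk : forall x, x \in F -> dg F x = k.
  move=> x xF; apply/eqP; rewrite eqn_leq Hdeg //=; rewrite leqNgt.
  by apply/negP => H; move/negP: nolow; apply; apply/exists_inP; exists x.
have ncl : ~~ clv F v by apply/negP => cv; move: (Hcl v vF cv); rewrite dk ?eqxx.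
have [u uN neq] : exists2 u, u \in Nb F v & NN F u != NN F v.
  move: ncl; rewrite negb_forall_in => /exists_inP[u ? ?]; by exists u.
have uF : u \in F by move: uN; rewrite NbE => /andP[].
have [y yu ynv] : exists2 y, y \in NN F u & y \notin NN F v.
  apply/exists_inP; rewrite -negb_forall_in; apply/negP => /forall_inP Hs.
  move/negP: neq; apply; rewrite eqEcard !card_NN !dk //= leqnn andbT.
  by apply/subsetP.
have yneu : y != u by apply/negP => /eqP yu'; move: ynv; rewrite yu' in_setU1 uN orbT.
have yNu : y \in Nb F u by move: yu; rewrite in_setU1 (negbTE yneu).
have yF : y \in F by move: yNu; rewrite NbE => /andP[].
have yF' : y \in F :\: NN F v by rewrite inE ynv yF.
have low : [exists x in F :\: NN F v, dg (F :\: NN F v) x < k].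
  apply/exists_inP; exists y => //; rewrite -(dk y yF).
  apply: proper_card; apply/properP; split; first by apply: Nb_sub; apply: subsetDl.
  exists u; first by rewrite NbE uF esym; move: yNu; rewrite NbE => /andP[].
  by rewrite NbE inE negb_and !negb_and /= -/(NN F v) inE uN orbT.
have := IH' v vF; rewrite low; have := al_add1 vF; have := card_split vF.
rewrite dk //; nia.
Qed.


Lemma dg0_clv S x : dg S x = 0 -> clv S x.
Proof. by move=> /cards0_eq H; apply/forall_inP => u; rewrite H inE. Qed.

Section Main.
Variables (R : realFieldType) (D : nat) (c : nat -> R).
Local Open Scope ring_scope.
Hypothesis Hdeg : forall x, (dg setT x <= D)%N.
Hypothesis Hc1 : forall i, (1 <= i <= D)%N -> c i <= 1.
Hypothesis Hc2 : forall i, (1 <= i)%N -> (i < D)%N -> i%:R * c i + c i.+1 <= 1.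
Hypothesis Hc3 : forall k, (1 <= k <= D)%N -> (2*k+1)%:R * c k <= 2%:R.
Hypothesis Hmono : forall i j, (1 <= i)%N -> (i <= j)%N -> (j <= D)%N -> c j <= c i.

Lemma dgD S x : (dg S x <= D)%N.
Proof. exact: leq_trans (dg_sub x (subsetT S)) (Hdeg x). Qed.

Lemma inner S (ncl : forall x, x \in S -> ~~ clv S x)
  (IH : forall A, (#|A| < #|S|)%N -> (forall x, x \in A -> ~~ clv A x) ->
        \sum_(x in A) c (dg A x) <= (al A)%:R) n :
  forall A, (#|A| < n)%N -> A \subset S -> (#|A| < #|S|)%N ->
     \sum_(x in A) c (dg S x) <= (al A)%:R.
Proof.
elim: n => [//|n IHn] A An AS AltS.
case: (boolP [exists x in A, clv A x]) => [/exists_inP[x xA cx]|nocl].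
  set K := NN A x; set j := dg A x.
  have KA : K \subset A := NN_sub xA.
  rewrite (big_setID K) /= (setIidPr KA).
  have Hrest := IHn (A :\: K).
  have := card_split xA; rewrite -/K -/j => cardA.
  have {}Hrest := Hrest ltac:(lia) (subset_trans (subsetDl _ _) AS) ltac:(lia).
  have al1 := al_add1 xA; rewrite -/K in al1.
  suff HK : \sum_(i in K) c (dg S i) <= 1.
    apply: le_trans (lerD HK Hrest) _.
    rewrite -(ler_nat R) in al1; apply: le_trans al1.
    by rewrite -addn1 natrD addrC.
  have Hy : forall y, y \in K -> NN A y = K := fun y => NN_clv cx.
  have dgy : forall y, y \in K -> dg A y = j.
    by move=> y yK; apply/eqP; rewrite -eqSS -!card_NN Hy.
  have yA : forall y, y \in K -> y \in A := fun y => subsetP KA y.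
  have yS : forall y, y \in K -> (dg A y <= dg S y)%N :=
    fun y _ => dg_sub y AS.
  have [y0 y0K dy0] : exists2 y0, y0 \in K & (j < dg S y0)%N.
    apply/exists_inP; apply/contraT; rewrite negb_exists_in => /forall_inP Hn.
    have Heq : forall y, y \in K -> Nb A y = Nb S y.
      move=> y yK; apply/eqP; rewrite eqEcard Nb_sub //=.
      by have := Hn y yK; rewrite -/(dg S y) -/(dg A y) dgy // -leqNgt.
    suff cxS : clv S x by move: (ncl x (subsetP AS x xA)); rewrite cxS.
    apply/forall_inP => u.
    rewrite -(Heq x (in_NN A x)) => uN.
    have uK : u \in K by rewrite in_setU1 uN orbT.
    by rewrite /NN -(Heq u uK) -(Heq x (in_NN A x)) -/(NN A u) -/(NN A x) Hy.
  have dy0D := dgD S y0.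
  rewrite (big_setD1 y0) //=.
  have cK : #|K :\ y0| = j.
    by have := cardsD1 y0 K; rewrite y0K /K card_NN -/j; lia.
  case: (posnP j) => [j0|jpos].
    have -> : K :\ y0 = set0 by apply: cards0_eq; rewrite cK.
    by rewrite big_set0 addr0; apply: Hc1; rewrite dy0D; lia.
  apply: le_trans (_ : c j.+1 + c j *+ j <= 1).
    apply: lerD; first by apply: Hmono => //; lia.
    apply: le_trans (_ : \sum_(y in K :\ y0) c j <= _); last by rewrite sumr_const cK.
    apply: ler_sum => y /setD1P[_ yK].
    apply: Hmono => //; rewrite ?dgD //; rewrite -(dgy y yK); exact: yS.
  by rewrite -mulr_natl addrC; apply: Hc2 => //; lia.
apply: le_trans (IH A AltS _).
  apply: ler_sum => x xA; apply: Hmono.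
  - rewrite lt0n; apply/negP => /eqP d0; move/negP: nocl; apply.
    by apply/exists_inP; exists x => //; apply: dg0_clv.
  - exact: dg_sub.
  - exact: dgD.
by move=> x xA; apply/negP => cx; move/negP: nocl; apply; apply/exists_inP; exists x.
Qed.


Definition good S v :=
  [forall u in Nb S v, dg S v <= dg S u]%N && [exists u in Nb S v, dg S v < dg S u]%N.

Lemma mainM n : forall S, (#|S| < n)%N -> (forall x, x \in S -> ~~ clv S x) ->
  \sum_(x in S) c (dg S x) <= (al S)%:R.
Proof.
elim: n => [//|n IHn] S Sn ncl.
have IH : forall A, (#|A| < #|S|)%N -> (forall x, x \in A -> ~~ clv A x) ->
        \sum_(x in A) c (dg A x) <= (al A)%:R.
  by move=> A AS; apply: IHn; lia.
have inn := inner ncl IH.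
case: (set_0Vmem S) => [->|[v0 v0S]]; first by rewrite big_set0 ler0n.
case: (boolP [exists v in S, good S v]).
  move=> /exists_inP[v vS /andP[/forall_inP Hall /exists_inP[u0 u0N du0]]].
  set k := dg S v in Hall du0.
  have cS := card_split vS.
  have Hr := inn (#|S :\: NN S v|.+1) (S :\: NN S v) (ltnSn _) (subsetDl _ _) ltac:(lia).
  have al1 := al_add1 vS.
  rewrite (big_setID (NN S v)) /= (setIidPr (NN_sub vS)).
  suff HK : \sum_(i in NN S v) c (dg S i) <= 1.
    apply: le_trans (lerD HK Hr) _.
    rewrite -(ler_nat R) in al1; apply: le_trans al1.
    by rewrite -addn1 natrD addrC.
  rewrite /NN big_setU1 ?notin_Nb //= (big_setD1 u0) //=.
  have kpos : (0 < k)%N by rewrite /k /dg; apply/card_gt0P; exists u0.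
  have dD := dgD S u0.
  have cK : #|Nb S v :\ u0| = k.-1.
    by have := cardsD1 u0 (Nb S v); rewrite u0N -/(dg S v) -/k; lia.
  have H1 : c (dg S u0) <= c k.+1 by apply: Hmono => //; lia.
  have H2 : \sum_(i in Nb S v :\ u0) c (dg S i) <= c k *+ k.-1.
    rewrite -cK -sumr_const; apply: ler_sum => y /setD1P[_ yN].
    by apply: Hmono => //; [exact: Hall | exact: dgD].
  have H3 := Hc2 kpos ltac:(lia).
  have kE : k = k.-1.+1 by lia.
  move: H3; rewrite {1}kE mulrS mulrDl mul1r => H3.
  rewrite -mulr_natl in H2; lra.
move=> nogood.
case: (@arg_minnP _ v0 (fun x => x \in S) (fun x => dg S x) v0S) => v vS vmin.
set k := dg S v.
set C := [set x in S | dg S x == k].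
have CS : C \subset S by apply/subsetP => x; rewrite inE => /andP[].
have vC : v \in C by rewrite inE vS eqxx.
have adjC : adjclosed C S.
  move=> x y; rewrite !inE => /andP[xS /eqP dx] yS exy; rewrite yS /=.
  rewrite eqn_leq vmin // andbT leqNgt; apply/negP => dy.
  move/negP: nogood; apply; apply/exists_inP; exists x => //.
  apply/andP; split.
    by apply/forall_inP => u; rewrite NbE => /andP[uS _]; rewrite dx; apply: vmin.
  by apply/exists_inP; exists y; [rewrite NbE yS | rewrite dx].
have adjD : adjclosed (S :\: C) S.
  move=> x y xD yS exy.
  have [xnC xS] : x \notin C /\ x \in S by move: xD; rewrite inE => /andP[].
  rewrite inE yS andbT; apply/negP => yC; move/negP: xnC; apply.
  by apply: (adjC y x yC xS); rewrite esym.
have DS : S :\: C \subset S := subsetDl _ _.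
have cardC : (#|S :\: C| < #|S|)%N.
  by rewrite -(cardsID C S) (setIidPr CS) -addn1 addnC leq_add2r card_gt0; apply/set0Pn; exists v.
have HD := IH (S :\: C) cardC.
have ncD : forall x, x \in S :\: C -> ~~ clv (S :\: C) x.
  by move=> x xD; rewrite (clv_restr DS adjD xD); apply: ncl; apply: (subsetP DS).
have {}HD := HD ncD.
have alS : (al C + al (S :\: C) <= al S)%N.
  have := al_split (A := S :&: C) (B := S :\: C) _ _; rewrite setID (setIidPr CS); apply.
    move=> a b aC bD; apply/negP => eab; move: bD; rewrite inE => /andP[/negP bnC bS].
    by apply: bnC; apply: (adjC a b).
  by rewrite disjoint_subset; apply/subsetP => x xC; rewrite inE /= in_setD xC.
have kpos : (0 < k)%N.
  rewrite lt0n; apply/negP => /eqP k0; move/negP: (ncl v vS); apply; exact: dg0_clv.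
have kD : (k <= D)%N := dgD S v.
have HB := lemB (k := k) (n := #|C|.+1) (F := C) (ltnSn _).
have dC : forall x, x \in C -> dg C x = k.
  by move=> x xC; rewrite (dg_restr CS adjC xC); move: xC; rewrite inE => /andP[_ /eqP].
have {}HB := HB ltac:(by move=> x xC; rewrite dC) ltac:(by move=> x xC; rewrite (clv_restr CS adjC xC) (negbTE (ncl x (subsetP CS x xC)))).
have HB' : (2 * #|C| <= (2*k+1) * al C)%N by apply: leq_trans HB; apply: leq_addr.
rewrite (big_setID C) /= (setIidPr CS).
have -> : \sum_(i in C) c (dg S i) = c k *+ #|C|.
  by rewrite -sumr_const; apply: eq_bigr => x; rewrite inE => /andP[_ /eqP ->].
rewrite [X in _ + X](eq_bigr (fun i => c (dg (S :\: C) i))); last first.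
  by move=> x xD; rewrite (dg_restr DS adjD xD).
have HcC : c k *+ #|C| <= (al C)%:R.
  have H3 := Hc3 (k := k) ltac:(lia).
  rewrite -(ler_nat R) natrM in HB'.
  have a0 : 0 < ((2 * k + 1)%:R : R) by rewrite ltr0n; lia.
  have m0 : 0 <= (#|C|%:R : R) by apply: ler0n.
  rewrite -mulr_natr.
  move: HB' H3 a0 m0; rewrite natrM.
  set a := ((2 * k + 1)%:R : R); set m := (#|C|%:R : R); set A := ((al C)%:R : R).
  move=> HB' H3 a0 m0; nra.
apply: le_trans (lerD HcC HD) _.
by rewrite -natrD ler_nat.
Qed.

End Main.
End Graph.


Local Open Scope ring_scope.

Lemma divle (R : realFieldType) (a x y : R) : 0 < a -> x <= y / a -> a * x <= y.
Proof. by move=> a0 h; rewrite -(ler_pdivlMl _ _ a0) mulrC. Qed.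

Theorem corollary1 (R : realFieldType) (T : finType) (e : rel T) (D : nat)
  (c : nat -> R) :
  (3 <= D)%N ->
  simple_graph e -> connected_graph e -> max_degree_eq e D ->
  ~ is_complete e D.+1 ->
  0 < c D -> c D <= 2 / (2 * D%:R + 1) ->
  (forall i : nat, (1 <= i)%N -> (i <= D - 1)%N ->
     c i = Num.min ((1 - c i.+1) / i%:R) (2 / (2 * i%:R + 1))) ->
  \sum_(1 <= i < D.+1) c i * (#|Vdeg e i|)%:R <= (alpha e)%:R.
Proof.
move=> D3 [esym eirr] conn [Hmax [w0 Hw0]] ncomp cD0 cDle Hcmin.
have dgE : forall x, dg e setT x = deg e x.
  by move=> x; rewrite /dg /deg /Nb; apply: eq_card => u; rewrite !inE.
have Hdeg : forall x, (dg e setT x <= D)%N by move=> x; rewrite dgE.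
have Hc3 : forall k, (1 <= k <= D)%N -> (2*k+1)%:R * c k <= 2%:R.
  move=> k /andP[k1 kD]; rewrite natrD natrM /=.
  apply: divle; first by apply: ltr_wpDl; [apply: mulr_ge0; apply: ler0n| apply: ltr01].
  case: (ltnP k D) => kD'.
    by rewrite Hcmin //; [rewrite ge_min lexx orbT | lia].
  by have -> : k = D by lia.
have Hc1 : forall i, (1 <= i <= D)%N -> c i <= 1.
  move=> i Hi; have := Hc3 i Hi; rewrite natrD natrM.
  have : 1 <= (i%:R : R) by rewrite ler1n; case/andP: Hi.
  move=> h1 h2; nra.
have Hc2 : forall i, (1 <= i)%N -> (i < D)%N -> i%:R * c i + c i.+1 <= 1.
  move=> i i1 iD; rewrite -lerBrDr; apply: divle; first by rewrite ltr0n.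
  by rewrite Hcmin //; [rewrite ge_min lexx | lia].
have Hstep : forall i, (1 <= i)%N -> (i < D)%N -> c i.+1 <= c i.
  move=> i i1 iD; rewrite [c i](Hcmin i i1 ltac:(lia)).
  have := Hc3 i.+1 ltac:(lia); rewrite natrD natrM -addn1 natrD.
  have : 1 <= (i%:R : R) by rewrite ler1n.
  have a0 : 0 < (i%:R : R) by rewrite ltr0n.
  have b0 : 0 < 2 * (i%:R : R) + 1 by nra.
  move=> h1 h2; rewrite le_min (ler_pdivlMr _ _ a0) (ler_pdivlMr _ _ b0); apply/andP; split; nra.
have Hmono : forall i j, (1 <= i)%N -> (i <= j)%N -> (j <= D)%N -> c j <= c i.
  move=> i j i1; elim: j => [|j IHj]; first by lia.
  rewrite leq_eqVlt => /orP[/eqP <- //|ij] jD.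
  by apply: le_trans (IHj ij ltac:(lia)); apply: Hstep; lia.
have ncl : forall x, x \in [set: T] -> ~~ clv e [set: T] x.
  move=> x _; apply/negP => cx.
  set A := NN e [set: T] x.
  have clA : closed e (mem A).
    have H : forall u v, e u v -> u \in A -> v \in A.
      move=> u v euv uA; have := NN_clv cx uA; rewrite -/A => <-.
      by rewrite in_setU1 NbE in_setT euv orbT.
    move=> u v euv; apply/idP/idP; first exact: H.
    by apply: H; rewrite esym.
  have allA : forall y, y \in A.
    by move=> y; rewrite -(closed_connect clA (conn x y)) in_NN.
  have w0A := allA w0.
  apply: ncomp; split.
    rewrite -cardsT; have -> : [set: T] = A by apply/setP => y; rewrite in_setT allA.
    by rewrite /A -(NN_clv cx w0A) card_NN // dgE Hw0.
  move=> a b ab; have := allA b; rewrite /A -(NN_clv cx (allA a)) in_setU1 NbE in_setT /=.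
  by case/orP => [/eqP ba|//]; rewrite ba eqxx in ab.
have HM := mainM esym eirr Hdeg Hc1 Hc2 Hc3 Hmono (ltnSn #|[set: T]|) ncl.
have -> : alpha e = al e [set: T].
  by rewrite /alpha /al; apply: eq_bigl => I; rewrite subsetT andbT.
apply: le_trans HM.
rewrite le_eqVlt; apply/orP; left; apply/eqP.
have -> : \sum_(x in [set: T]) c (dg e [set: T] x) = \sum_x c (deg e x).
  by apply: eq_big => x; rewrite ?in_setT ?dgE.
transitivity (\sum_(1 <= i < D.+1) \sum_x (deg e x == i)%:R * c i).
  apply: eq_bigr => i _; rewrite mulr_natr -sumr_const big_mkcond /=.
  by apply: eq_bigr => x _; rewrite inE; case: (deg e x == i); rewrite ?mul1r ?mul0r.
rewrite exchange_big /=; apply: eq_bigr => x _.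
have dx1 : (1 <= deg e x)%N.
  rewrite lt0n; apply/negP => /eqP d0; move/negP: (ncl x (in_setT x)); apply.
  by apply: dg0_clv; rewrite dgE.
rewrite (bigD1_seq (deg e x)) /=; last by apply: iota_uniq.
  rewrite eqxx mul1r big1 ?addr0 // => i /negbTE; rewrite eq_sym => ->; by rewrite mul0r.
by rewrite mem_index_iota dx1 ltnS Hmax.
Qed.
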